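(* Let $m,n\ge 2$ be natural numbers with $n=k(m-1)+m$ for some integer $k\ge 1$, and let $G\le\operatorname{Sym}(m)$. Let $H=G_{ext}\le\operatorname{Sym}(n)$ be the extended group of $G$, consisting of the permutations of $\{0,\dots,n-1\}$ that act as an element of $G$ on $\{0,\dots,m-1\}$ and as the identity on $\{m,\dots,n-1\}$. Then $V_m(G)$ embeds (as a group) in $V_n(H)$.
   Context: For $r\ge 2$ let $\mathcal{A}_r=\{0,1,\dots,r-1\}$, let $\mathcal{A}_r^*$ be the set of finite words over $\mathcal{A}_r$ (including the empty word), and let $\mathfrak{C}_r=\mathcal{A}_r^{\mathbb{N}}$ (infinite words, product topology). For $u\in\mathcal{A}_r^*$ and $v$ a finite or infinite word, $uv$ denotes concatenation, and $u\le_{pref} v$ means $v=uw$ for some word $w$. A (complete) prefix code of $\mathfrak{C}_r$ is a finite set $S\subset\mathcal{A}_r^*$ such that every $\zeta\in\mathfrak{C}_r$ has exactly one $s\in S$ with $s\le_{pref}\zeta$. A permutation $\sigma\in\operatorname{Sym}(r)$ acts on words letterwise: $\sigma(z_1z_2\cdots)=\sigma(z_1)\sigma(z_2)\cdots$. For $H\le\operatorname{Sym}(r)$, the symmetric Thompson group $V_r(H)$ is the group (under composition) of homeomorphisms of $\mathfrak{C}_r$ described by tables: two prefix codes $P=\{p_1,\dots,p_k\}$ and $Q=\{q_1,\dots,q_k\}$ of $\mathfrak{C}_r$ of the same size together with $\sigma_i,\tau_i\in H$, describing the homeomorphism $p_i\,\sigma_i(u)\mapsto q_i\,\tau_i(u)$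 for all $u\in\mathfrak{C}_r$ and all $i$. *)

(* Defs.v *)
From mathcomp Require Import all_boot all_fingroup.
Set Implicit Arguments. Unset Strict Implicit. Unset Printing Implicit Defensive.

Definition cantor (r : nat) := nat -> 'I_r.

Definition cat_inf (r : nat) (u : seq 'I_r) (z : cantor r) : cantor r :=
  fun i => if i < size u then nth (z 0) u i else z (i - size u).

Definition is_prefix (r : nat) (u : seq 'I_r) (z : cantor r) : Prop :=
  exists w : cantor r, z = cat_inf u w.

Definition act_inf (r : nat) (s : {perm 'I_r}) (z : cantor r) : cantor r :=
  fun i => s (z i).

Definition prefix_code (r : nat) (S : seq (seq 'I_r)) : Prop :=
  uniq S /\ forall z : cantor r, exists! s, s \in S /\ is_prefix s z.

Definition in_V (r : nat) (H : {perm 'I_r} -> Prop)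
    (f : cantor r -> cantor r) : Prop :=
  exists (P Q : seq (seq 'I_r)) (sg tau : seq {perm 'I_r}),
    [/\ size Q = size P, size sg = size P & size tau = size P] /\
    [/\ prefix_code P, prefix_code Q,
        (forall s, s \in sg -> H s), (forall t, t \in tau -> H t) &
        forall i, i < size P -> forall u : cantor r,
          f (cat_inf (nth [::] P i) (act_inf (nth 1%g sg i) u))
          = cat_inf (nth [::] Q i) (act_inf (nth 1%g tau i) u)].

Definition G_ext (m n : nat) (G : {set {perm 'I_m}}) (s : {perm 'I_n}) : Prop :=
  exists2 g, g \in G &
    (forall (j : 'I_m) (i : 'I_n), val i = val j -> val (s i) = val (g j)) /\
    (forall i : 'I_n, m <= val i -> s i = i).

(* Main.v *)
Require Import Defs.
From mathcomp Require Import all_boot all_fingroup zify.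
From Stdlib Require Import FunctionalExtensionality ClassicalEpsilon IndefiniteDescription.
Set Implicit Arguments. Unset Strict Implicit. Unset Printing Implicit Defensive.

Section Gen.
Variable r : nat.

Definition ccons (b : 'I_r) (y : cantor r) : cantor r :=
  fun t => match t with 0 => b | t'.+1 => y t' end.
Definition shift (t : nat) (z : cantor r) : cantor r := fun i => z (t + i).

Lemma cat_inf_cons b u (y : cantor r) : cat_inf (b :: u) y = ccons b (cat_inf u y).
Proof.
apply: functional_extensionality => -[|t] /=; first by [].
by rewrite /cat_inf /= ltnS subSS.
Qed.

Lemma cat_inf_nil (y : cantor r) : cat_inf [::] y = y.
Proof. by apply: functional_extensionality => t; rewrite /cat_inf /= subn0. Qed.

Lemma cat_inf_cat u1 u2 (y : cantor r) :
  cat_inf (u1 ++ u2) y = cat_inf u1 (cat_inf u2 y).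
Proof.
elim: u1 => [|b u1 IH]; first by rewrite cat_inf_nil.
by rewrite cat_cons !cat_inf_cons IH.
Qed.

Lemma mkseq_cat_inf u (y : cantor r) : mkseq (cat_inf u y) (size u) = u.
Proof.
elim: u => [|b u IH] //=.
rewrite cat_inf_cons -[in RHS]IH /mkseq /= -[1]addn0 iotaDl -map_comp.
by congr (_ :: _); apply: eq_map => i.
Qed.

Lemma shift_cat_inf u (y : cantor r) : shift (size u) (cat_inf u y) = y.
Proof.
apply: functional_extensionality => t.
by rewrite /shift /cat_inf ltnNge leq_addr /= addKn.
Qed.

Lemma cat_inf_mkseq (z : cantor r) t : cat_inf (mkseq z t) (shift t z) = z.
Proof.
apply: functional_extensionality => i.
rewrite /cat_inf size_mkseq; case: ifP => h.
  by rewrite (set_nth_default (z 0)) ?size_mkseq // nth_mkseq.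
by rewrite /shift subnKC // leqNgt h.
Qed.

Lemma is_prefixP u (z : cantor r) : is_prefix u z -> mkseq z (size u) = u /\ z = cat_inf u (shift (size u) z).
Proof.
case=> w ->; by rewrite mkseq_cat_inf shift_cat_inf.
Qed.

Lemma act_cat_inf (h : {perm 'I_r}) u (z : cantor r) :
  act_inf h (cat_inf u z) = cat_inf (map h u) (act_inf h z).
Proof.
apply: functional_extensionality => i.
rewrite /act_inf /cat_inf size_map; case: ifP => // hi.
by rewrite (nth_map (z 0)).
Qed.

Lemma mkseq_add (z : cantor r) t d : mkseq z (t + d) = mkseq z t ++ mkseq (shift t z) d.
Proof.
rewrite /mkseq iotaD map_cat add0n.
have -> : iota t d = map (addn t) (iota 0 d) by rewrite -iotaDl addn0.
by rewrite -map_comp.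
Qed.

Lemma shift_add (z : cantor r) t d : shift (t + d) z = shift d (shift t z).
Proof. by apply: functional_extensionality => i; rewrite /shift addnA. Qed.

Lemma act_inf1 (z : cantor r) : act_inf 1 z = z.
Proof. by apply: functional_extensionality => i; rewrite /act_inf perm1. Qed.

Lemma act_infM (s t : {perm 'I_r}) (z : cantor r) : act_inf t (act_inf s z) = act_inf (s * t) z.
Proof. by apply: functional_extensionality => i; rewrite /act_inf permM. Qed.

Lemma shift_act (s : {perm 'I_r}) t (z : cantor r) : shift t (act_inf s z) = act_inf s (shift t z).
Proof. by []. Qed.

Lemma mkseq_act (s : {perm 'I_r}) t (z : cantor r) : mkseq (act_inf s z) t = map s (mkseq z t).
Proof. by rewrite /mkseq -map_comp. Qed.

End Gen.


Section Mach.
Variables (m n k : nat).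
Hypothesis Hm : 1 < m.
Hypothesis Hk : 0 < k.
Hypothesis Hn : n = k * (m - 1) + m.

Lemma m_pos : 0 < m. Proof. exact: ltnW. Qed.
Lemma km_pos : 0 < k * (m - 1). Proof. rewrite muln_gt0 Hk /=; lia. Qed.
Lemma n_gt_m : m < n. Proof. have := km_pos; rewrite Hn; lia. Qed.
Lemma n_pos : 0 < n. Proof. have := n_gt_m; lia. Qed.
Lemma n_gt1 : 1 < n. Proof. have := n_gt_m; lia. Qed.

Definition zm : 'I_m := Ordinal m_pos.
Definition om : 'I_m := Ordinal Hm.
Definition zn : 'I_n := Ordinal n_pos.
Definition mL : 'I_n := Ordinal n_gt_m.
Definition onen : 'I_n := Ordinal n_gt1.

Definition J := 'I_k.+1.
Definition toN (a : 'I_m) : 'I_n := insubd zn (val a).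
Definition extraL (j : J) (a : 'I_m) : 'I_n := insubd zn (m + j * (m-1) + a.-1).
Definition ug (a : 'I_m) (j : J) : J * option 'I_n :=
  if j == ord_max then (ord0, Some (toN a))
  else if a == zm then (inord j.+1, None)
  else (ord0, Some (extraL j a)).
Definition unstp (a : 'I_m) (s : J * cantor n) : J * cantor n :=
  let: (j', ob) := ug a s.1 in (j', if ob is Some b then ccons b s.2 else s.2).
Definition unstpW (a : 'I_m) (s : J * seq 'I_n) : J * seq 'I_n :=
  let: (j', ob) := ug a s.1 in (j', if ob is Some b then b :: s.2 else s.2).

Definition stp (s : J * cantor n) : 'I_m * (J * cantor n) :=
  let: (j, y) := s in
  if 0 < (j : nat) then (zm, (inord j.-1, y))
  else if (y 0 : nat) < m then (insubd zm (y 0 : nat), (ord_max, shift 1 y))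
  else (insubd zm (((y 0 : nat) - m) %% (m-1)).+1,
        (inord (((y 0 : nat) - m) %/ (m-1)), shift 1 y)).

Lemma ccons_shift (y : cantor n) : ccons (y 0) (shift 1 y) = y.
Proof. by apply: functional_extensionality => -[|t]. Qed.

Lemma shift_ccons b (y : cantor n) : shift 1 (ccons b y) = y.
Proof. by []. Qed.

Lemma stp_unstp a s : stp (unstp a s) = (a, s).
Proof.
case: s => j y; rewrite /unstp /ug /=.
have am := ltn_ord a.
case: eqP => [->|hj].
  rewrite /stp /= /toN val_insubd (ltn_trans am n_gt_m) am.
  by congr (_, (_, _)); apply: val_inj; rewrite /= val_insubd am.
case: eqP => [->|ha].
  rewrite /stp /= inordK ?ltnS; last first.
    have := ltn_ord j; rewrite ltnS leq_eqVlt => /orP[/eqP hh|//].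
    by case: hj; apply: val_inj.
  by rewrite /= inord_val.
have jk : (j : nat) < k.
  have := ltn_ord j; rewrite ltnS leq_eqVlt => /orP[/eqP hh|//].
  by case: hj; apply: val_inj.
have a0 : 0 < (a : nat).
  rewrite lt0n; apply/eqP => h; apply: ha; exact: val_inj.
have hb : m + j * (m - 1) + a.-1 < n.
  rewrite Hn.
  have : j * (m - 1) <= (k - 1) * (m - 1) by apply: leq_mul; lia.
  have : a.-1 <= m - 2 by have := ltn_ord a; lia.
  have : m - 1 <= k * (m - 1) by rewrite leq_pmull.
  rewrite mulnBl mul1n; lia.
rewrite /stp /= /extraL val_insubd hb.
rewrite ifF; last by apply/negbTE; rewrite -leqNgt; lia.
have e1 : (m + j * (m - 1) + a.-1 - m) %% (m - 1) = a.-1.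
  rewrite -addnA addKn; rewrite modnMDl modn_small //; lia.
have e2 : (m + j * (m - 1) + a.-1 - m) %/ (m - 1) = j.
  rewrite -addnA addKn divnMDl; last lia.
  by rewrite divn_small ?addn0 //; lia.
rewrite e1 e2 inord_val.
congr (_, (_, _)); apply: val_inj; rewrite /= val_insubd.
by rewrite prednK // am.
Qed.

Lemma unstp_stp s : unstp (stp s).1 (stp s).2 = s.
Proof.
case: s => j y; rewrite /stp /=.
case: ifP => [jp|j0]; last first.
  have j0' : j = ord0 by apply: val_inj => /=; move: j0; rewrite lt0n => /negbFE/eqP.
  case: ifP => hb.
    rewrite /unstp /ug /= eqxx /= j0'; congr (_, _).
    rewrite -[in RHS](ccons_shift y); congr ccons.
    by apply: val_inj; rewrite /toN /= !val_insubd hb (ltn_trans hb n_gt_m).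
  have hb' : m <= y 0 by rewrite leqNgt hb.
  have yn := ltn_ord (y 0).
  set q := (y 0 : nat) - m.
  have qk : q %/ (m - 1) < k.
    rewrite ltn_divLR; last lia.
    have yn' : (y 0 : nat) < k * (m - 1) + m by rewrite -Hn.
    rewrite /q; lia.
  rewrite /unstp /ug /=.
  rewrite ifF; last first.
    apply/negbTE/eqP => /(congr1 val) /=; rewrite inordK; lia.
  rewrite ifF; last first.
    apply/negbTE/eqP => /(congr1 val) /=; rewrite val_insubd.
    have : (q %% (m - 1)).+1 < m by have := ltn_pmod q (_ : 0 < m - 1); lia.
    by move=> ->.
  rewrite j0'; congr (_, _).
  rewrite -[in RHS](ccons_shift y); congr ccons.
  apply: val_inj; rewrite /extraL /= !val_insubd.
  have hm1 : (q %% (m - 1)).+1 < m by have := ltn_pmod q (_ : 0 < m - 1); lia.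
  have qk1 : q %/ (m - 1) < k.+1 by lia.
  rewrite hm1 qk1 /=.
  have -> : m + q %/ (m - 1) * (m - 1) + q %% (m - 1) = y 0.
    rewrite /q; have := divn_eq q (m - 1); lia.
  by rewrite yn.
rewrite /unstp /ug /=.
rewrite ifF; last first.
  apply/negbTE/eqP => /(congr1 val) /=; rewrite inordK; have := ltn_ord j; lia.
congr (_, _); apply: val_inj.
have h1 : j.-1 < k.+1 by have := ltn_ord j; lia.
by rewrite /= (inordK h1) prednK // inordK.
Qed.


Definition st (t : nat) (s : J * cantor n) := iter t (fun s => (stp s).2) s.
Arguments st : simpl never.
Definition E0 (s : J * cantor n) : cantor m := fun t => (stp (st t s)).1.
Definition enc0 (w : seq 'I_m) (s : J * cantor n) := foldr unstp s w.
Definition encW (w : seq 'I_m) (j : J) := foldr unstpW (j, [::]) w.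

Lemma st_S t s : st t.+1 s = st t (stp s).2.
Proof. by rewrite /st iterSr. Qed.

Lemma st_add t d s : st (t + d) s = st d (st t s).
Proof. by rewrite /st addnC iterD. Qed.

Lemma E0_st t s : E0 (st t s) = shift t (E0 s).
Proof. by apply: functional_extensionality => i; rewrite /E0 /shift -st_add. Qed.

Lemma E0_unstp a s : E0 (unstp a s) = ccons a (E0 s).
Proof.
apply: functional_extensionality => -[|t].
  by rewrite /E0 /= stp_unstp.
by rewrite /E0 /= st_S stp_unstp.
Qed.

Lemma st_enc0 w s : st (size w) (enc0 w s) = s.
Proof.
elim: w => [|a w IH] //=.
by rewrite st_S stp_unstp.
Qed.

Lemma E0_enc0 w s : E0 (enc0 w s) = cat_inf w (E0 s).
Proof.
elim: w => [|a w IH]; first by rewrite cat_inf_nil.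
by rewrite /= E0_unstp IH cat_inf_cons.
Qed.

Lemma enc0_dec t s : enc0 (mkseq (E0 s) t) (st t s) = s.
Proof.
elim: t s => [|t IH] s; first by [].
have -> : mkseq (E0 s) t.+1 = (stp s).1 :: mkseq (E0 (stp s).2) t.
  rewrite /mkseq /= -[1]addn0 iotaDl -map_comp; congr (_ :: _).
  by apply: eq_map => i /=; rewrite /E0 st_S.
by rewrite /= st_S IH unstp_stp.
Qed.

Lemma enc0_cat w1 w2 s : enc0 (w1 ++ w2) s = enc0 w1 (enc0 w2 s).
Proof. by rewrite /enc0 foldr_cat. Qed.

Lemma encW_gen w j u y :
  foldr unstp (j, cat_inf u y) w =
  ((foldr unstpW (j, u) w).1, cat_inf (foldr unstpW (j, u) w).2 y).
Proof.
elim: w => [|a w IH] //=.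
rewrite IH /unstp /unstpW /=.
case: (ug a _) => j' [b|] //=.
by rewrite cat_inf_cons.
Qed.

Lemma enc0_encW w j y : enc0 w (j, y) = ((encW w j).1, cat_inf (encW w j).2 y).
Proof. by rewrite /enc0 /encW -encW_gen cat_inf_nil. Qed.

Definition Pt := ({perm 'I_m} * (J * cantor n))%type.
Definition E (p : Pt) : cantor m := act_inf p.1 (E0 p.2).
Definition Enc (w : seq 'I_m) (p : Pt) : Pt := (p.1, enc0 (map (p.1^-1)%g w) p.2).
Definition stP t (p : Pt) : Pt := (p.1, st t p.2).

Lemma E_Enc w p : E (Enc w p) = cat_inf w (E p).
Proof.
rewrite /E /Enc /= E0_enc0 act_cat_inf -map_comp map_id_in // => x _ /=.
by rewrite permKV.
Qed.

Lemma stP_Enc w p : stP (size w) (Enc w p) = p.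
Proof. by case: p => h s; rewrite /stP /Enc /= -(size_map (h^-1)%g) st_enc0. Qed.

Lemma Enc_dec t p : Enc (mkseq (E p) t) (stP t p) = p.
Proof.
case: p => h s; rewrite /Enc /stP /E /=.
rewrite mkseq_act -map_comp map_id_in ?enc0_dec // => x _ /=.
by rewrite permK.
Qed.

Lemma Enc_cat w1 w2 p : Enc (w1 ++ w2) p = Enc w1 (Enc w2 p).
Proof. by rewrite /Enc /= map_cat enc0_cat. Qed.

Lemma E_stP t p : E (stP t p) = shift t (E p).
Proof. by rewrite /E /stP /= E0_st. Qed.

Lemma Enc_ext t d (th : {perm 'I_m}) p :
  Enc (map th (mkseq (shift t (E p)) d)) ((p.1 * th)%g, st (t + d) p.2) = ((p.1 * th)%g, st t p.2).
Proof.
set p' := ((p.1 * th)%g, st t p.2).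
have -> : ((p.1 * th)%g, st (t + d) p.2) = stP d p' by rewrite /stP /p' /= st_add.
have -> : map th (mkseq (shift t (E p)) d) = mkseq (E p') d.
  rewrite /E /p' /= E0_st -mkseq_act; congr mkseq.
  by rewrite -act_infM.
exact: Enc_dec.
Qed.

Definition loc (f : cantor m -> cantor m) (w w' : seq 'I_m) (th : {perm 'I_m}) :=
  forall v, f (cat_inf w v) = cat_inf w' (act_inf th v).

Lemma zm_om : zm != om.
Proof. by []. Qed.

Lemma loc_uniq w1 w2 (th1 th2 : {perm 'I_m}) :
  (forall a, cat_inf w1 (act_inf th1 (fun _ => a)) = cat_inf w2 (act_inf th2 (fun _ => a))) ->
  w1 = w2 /\ th1 = th2.
Proof.
move=> H.
have Hs : size w1 = size w2.
  wlog: w1 w2 th1 th2 H / size w1 < size w2.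
    move=> hw; case: (ltngtP (size w1) (size w2)) => // hlt.
      exact: hw H hlt.
    by apply/esym; apply: (hw w2 w1 th2 th1) => // a; rewrite H.
  move=> hlt; exfalso.
  have key a : th1 a = nth zm w2 (size w1).
    have := congr1 (fun z => z (size w1)) (H a); rewrite /cat_inf ltnn subnn hlt /act_inf.
    by move=> ->; apply: set_nth_default.
  have := key zm; rewrite -(key om) => /perm_inj /eqP.
  by rewrite (negbTE zm_om).
have Hw : w1 = w2.
  apply: (eq_from_nth (x0 := zm)) => // i hi.
  have := congr1 (fun z => z i) (H zm); rewrite /cat_inf hi -Hs hi.
  by rewrite (set_nth_default zm) // [in RHS](set_nth_default zm) // -Hs.
split => //; apply/permP => a.
have := congr1 (fun z => z (size w1)) (H a); rewrite /cat_inf ltnn Hs ltnn !subnn.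
by [].
Qed.

Lemma loc_unique f w w1 th1 w2 th2 :
  loc f w w1 th1 -> loc f w w2 th2 -> w1 = w2 /\ th1 = th2.
Proof. by move=> l1 l2; apply: loc_uniq => a; rewrite -l1 -l2. Qed.

Lemma loc_ext f x t w th d :
  loc f (mkseq x t) w th ->
  loc f (mkseq x (t + d)) (w ++ map th (mkseq (shift t x) d)) th.
Proof.
move=> l v.
by rewrite mkseq_add cat_inf_cat l act_cat_inf cat_inf_cat.
Qed.

Definition locs f x (r : nat * seq 'I_m * {perm 'I_m}) := loc f (mkseq x r.1.1) r.1.2 r.2.

Definition pickl f x : option (nat * seq 'I_m * {perm 'I_m}) :=
  match excluded_middle_informative (exists r, locs f x r) with
  | left H => Some (proj1_sig (constructive_indefinite_description _ H))
  | right _ => None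
  end.

Lemma pickl_some f x r : pickl f x = Some r -> locs f x r.
Proof.
rewrite /pickl; case: excluded_middle_informative => // H [<-].
exact: proj2_sig (constructive_indefinite_description _ H).
Qed.

Lemma pickl_ex f x r : locs f x r -> exists r', pickl f x = Some r'.
Proof.
move=> h; rewrite /pickl; case: excluded_middle_informative => H.
  by eexists.
by case: H; exists r.
Qed.

Definition PHI f (p : Pt) : Pt :=
  match pickl f (E p) with
  | Some r => Enc r.1.2 ((p.1 * r.2)%g, st r.1.1 p.2)
  | None => p
  end.

Lemma loc_Enc_le f p t1 w1 th1 d w2 th2 :
  loc f (mkseq (E p) t1) w1 th1 -> loc f (mkseq (E p) (t1 + d)) w2 th2 ->
  Enc w1 ((p.1 * th1)%g, st t1 p.2) = Enc w2 ((p.1 * th2)%g, st (t1 + d) p.2).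
Proof.
move=> l1 l2.
have [-> ->] := loc_unique l2 (loc_ext d l1).
by rewrite Enc_cat Enc_ext.
Qed.

Lemma PHI_char f p t w th :
  loc f (mkseq (E p) t) w th -> PHI f p = Enc w ((p.1 * th)%g, st t p.2).
Proof.
move=> l.
have [[[t0 w0] th0] hp] := pickl_ex (r := (t, w, th)) l.
rewrite /PHI hp /=.
have l0 := pickl_some hp; rewrite /locs /= in l0.
case: (leqP t0 t) => h.
  rewrite -(subnKC h) in l *; exact: loc_Enc_le.
rewrite -(subnKC (ltnW h)) in l0 *; symmetry; exact: loc_Enc_le.
Qed.

Lemma E_PHI f p t w th :
  loc f (mkseq (E p) t) w th -> E (PHI f p) = f (E p).
Proof.
move=> l; rewrite (PHI_char l) E_Enc.
rewrite -[in RHS](cat_inf_mkseq (E p) t) l; congr cat_inf.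
by rewrite /E /= E0_st -act_infM.
Qed.

Definition locall f := forall x, exists t w th, loc f (mkseq x t) w th.

Lemma PHI_comp f g p : locall f -> locall g -> PHI (f \o g) p = PHI f (PHI g p).
Proof.
move=> lf lg.
set x := E p.
have [t1 [w1 [th1 l1]]] := lg x.
have [t2 [w2 [th2 l2]]] := lf (g x).
set w1' := w1 ++ map th1 (mkseq (shift t1 x) t2).
have l1' : loc g (mkseq x (t1 + t2)) w1' th1 by exact: loc_ext.
have gx : g x = cat_inf w1' (act_inf th1 (shift (t1 + t2) x)).
  by rewrite -l1' cat_inf_mkseq.
have hs : t2 <= size w1' by rewrite size_cat size_map size_mkseq leq_addl.
set w2' := w2 ++ map th2 (mkseq (shift t2 (g x)) (size w1' - t2)).
have l2' : loc f w1' w2' th2.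
  have := loc_ext (size w1' - t2) l2; rewrite subnKC // gx mkseq_cat_inf.
  by rewrite -gx.
have lc : loc (f \o g) (mkseq x (t1 + t2)) w2' (th1 * th2)%g.
  by move=> v /=; rewrite l1' l2' act_infM.
rewrite (PHI_char lc) (PHI_char l1').
have lE : loc f (mkseq (E (Enc w1' ((p.1 * th1)%g, st (t1 + t2) p.2))) (size w1')) w2' th2.
  by rewrite E_Enc mkseq_cat_inf.
rewrite (PHI_char lE) /= mulgA.
by rewrite -(size_map (p.1 * th1)^-1%g) st_enc0.
Qed.

Definition s0 : J * cantor n := (ord0, fun _ => mL).

Lemma stp_s0 : stp s0 = (om, s0).
Proof.
rewrite /stp /s0 /= ltnn subnn mod0n div0n.
by congr (_, (_, _)); apply: val_inj; rewrite /= ?val_insubd ?Hm // inordK.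
Qed.

Lemma st_s0 t : st t s0 = s0.
Proof. by elim: t => [|t IH] //; rewrite st_S stp_s0. Qed.

Lemma E0_s0 : E0 s0 = fun _ => om.
Proof. by apply: functional_extensionality => t; rewrite /E0 st_s0 stp_s0. Qed.

Lemma loc_Enc f q w w' th : loc f w w' th -> loc f (mkseq (E (Enc w q)) (size w)) w' th.
Proof. by rewrite E_Enc mkseq_cat_inf. Qed.

Lemma model_inj f g : locall f -> locall g -> (forall p, PHI f p = PHI g p) -> f = g.
Proof.
move=> lf lg H; apply: functional_extensionality => x.
have [t1 [w1 [th1 l1]]] := lf x.
have [t2 [w2 [th2 l2]]] := lg x.
have l1' := loc_ext t2 l1.
have l2' := loc_ext t1 l2; rewrite addnC in l2'.
set T := t1 + t2 in l1' l2'.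
have key a : f (cat_inf (mkseq x T) (fun _ => a)) = g (cat_inf (mkseq x T) (fun _ => a)).
  set pa := Enc (mkseq x T) (tperm om a, s0).
  have Ea : E pa = cat_inf (mkseq x T) (fun _ => a).
    rewrite E_Enc; congr cat_inf.
    by apply: functional_extensionality => i; rewrite /E /= E0_s0 /act_inf tpermL.
  have la := loc_Enc (tperm om a, s0) l1'.
  have lb := loc_Enc (tperm om a, s0) l2'.
  by rewrite -Ea -(E_PHI la) -(E_PHI lb) H.
have [ew eth] : _ /\ _ := loc_uniq (fun a => etrans (esym (l1' _)) (etrans (key a) (l2' _))).
by rewrite -(cat_inf_mkseq x T) l1' l2' ew eth.
Qed.

Definition I := ({perm 'I_m} * J)%type.
Definition L := #|{: I}|.
Definition code (i : I) : seq 'I_n :=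
  mkseq (fun t => if t < enum_rank i then onen else zn) L.

Lemma size_code i : size (code i) = L.
Proof. by rewrite size_mkseq. Qed.

Lemma zn_onen : zn != onen.
Proof. by []. Qed.

Lemma code_inj : injective code.
Proof.
move=> i i' H; apply: enum_rank_inj; apply: val_inj => /=.
wlog: i i' H / (enum_rank i : nat) < enum_rank i'.
  move=> hw; case: (ltngtP (enum_rank i) (enum_rank i')) => // hlt.
    exact: hw.
  by apply/esym; apply: hw.
move=> hlt; exfalso.
have hL : (enum_rank i : nat) < L by exact: ltn_ord.
have := congr1 (fun w => nth zn w (enum_rank i)) H.
rewrite /code !nth_mkseq // ltnn hlt => /eqP.
by rewrite (negbTE zn_onen).
Qed.

Definition decode (w : seq 'I_n) : option I := [pick i | code i == w].

Lemma decode_code i : decode (code i) = Some i.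
Proof.
rewrite /decode; case: pickP => [i' /eqP /code_inj -> //|H].
by have := H i; rewrite eqxx.
Qed.

Lemma decode_some w i : decode w = Some i -> code i = w.
Proof. by rewrite /decode; case: pickP => // i' /eqP <- [<-]. Qed.

Definition pref (z : cantor n) := mkseq z L.
Definition embed (p : Pt) : cantor n := cat_inf (code (p.1, p.2.1)) p.2.2.
Definition proj (z : cantor n) (i : I) : Pt := (i.1, (i.2, shift L z)).

Definition phi f (z : cantor n) : cantor n :=
  match decode (pref z) with
  | Some i => embed (PHI f (proj z i))
  | None => z
  end.

Lemma pref_cat i y : pref (cat_inf (code i) y) = code i.
Proof. by rewrite /pref -(size_code i) mkseq_cat_inf. Qed.

Lemma pref_embed p : pref (embed p) = code (p.1, p.2.1).
Proof. exact: pref_cat. Qed.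

Lemma proj_embed p : proj (embed p) (p.1, p.2.1) = p.
Proof.
case: p => h [j y]; rewrite /proj /embed /=.
by rewrite -(size_code (h, j)) shift_cat_inf.
Qed.

Lemma embed_proj z i : decode (pref z) = Some i -> embed (proj z i) = z.
Proof.
move/decode_some => h; rewrite /embed /proj /=.
by rewrite -surjective_pairing h cat_inf_mkseq.
Qed.

Lemma phi_embed f p : phi f (embed p) = embed (PHI f p).
Proof. by rewrite /phi pref_embed decode_code proj_embed. Qed.

Lemma embed_inj : injective embed.
Proof.
move=> p p' H.
have := pref_embed p; rewrite H pref_embed => /code_inj hc.
by rewrite -(proj_embed p) -(proj_embed p') H hc.
Qed.

Lemma phi_comp f g : locall f -> locall g -> phi (f \o g) = phi f \o phi g.
Proof.
move=> lf lg; apply: functional_extensionality => z /=.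
case hz: (decode (pref z)) => [i|]; last by rewrite /phi hz hz.
by rewrite -(embed_proj hz) !phi_embed PHI_comp.
Qed.

Lemma phi_inj f g : locall f -> locall g -> phi f = phi g -> f = g.
Proof.
move=> lf lg H; apply: model_inj => // p.
by apply: embed_inj; rewrite -!phi_embed H.
Qed.

Definition srcw (p : seq 'I_m) (i : I) : seq 'I_n :=
  code (i.1, (encW (map (i.1^-1)%g p) i.2).1) ++ (encW (map (i.1^-1)%g p) i.2).2.

Lemma embed_Enc p i y : cat_inf (srcw p i) y = embed (Enc p (i.1, (i.2, y))).
Proof. by rewrite /embed /Enc /= enc0_encW /= /srcw cat_inf_cat. Qed.

Fixpoint all_words (t : nat) : seq (seq 'I_n) :=
  if t is t'.+1 then [seq a :: w | a <- enum 'I_n, w <- all_words t'] else [:: [::]].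

Lemma mem_all_words t w : (w \in all_words t) = (size w == t).
Proof.
elim: t w => [|t IH] [|a w] //=.
  by apply/negbTE/negP => /allpairsP [[b u] [_ _ /= //]].
rewrite eqSS; apply/allpairsP/idP => [[[b u] /= [_ hu [_ ->]]]|hw].
  by rewrite -IH.
by exists (a, w); rewrite mem_enum IH.
Qed.

Lemma uniq_all_words t : uniq (all_words t).
Proof.
elim: t => [|t IH] //=.
apply: allpairs_uniq => //; first exact: enum_uniq.
by move=> [a w] [b u] _ _ /= [-> ->].
Qed.

Definition compl := [seq w <- all_words L | decode w == None].

Definition tbl (C : seq (seq 'I_m)) (bt : nat -> I -> I) : seq (seq 'I_n) :=
  [seq srcw (nth [::] C x.1) (bt x.1 x.2) | x <- [seq (a, b) | a <- iota 0 (size C), b <- enum {: I}]]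
  ++ compl.

Lemma pc_uniq (C : seq (seq 'I_m)) p p' x :
  prefix_code C -> p \in C -> p' \in C -> is_prefix p x -> is_prefix p' x -> p = p'.
Proof.
case=> _ /(_ x) [s [_ hs]] hp hp' h1 h2.
by rewrite -(hs p) ?(hs p').
Qed.

Lemma srcw_cat_inj (C : seq (seq 'I_m)) p p' i i' y y' :
  prefix_code C -> p \in C -> p' \in C ->
  cat_inf (srcw p i) y = cat_inf (srcw p' i') y' -> [/\ p = p', i = i' & y = y'].
Proof.
move=> pc hp hp'; rewrite !embed_Enc => /embed_inj H.
have e : p = p'.
  apply: (pc_uniq (x := E (Enc p (i.1, (i.2, y))))) pc hp hp' _ _.
    by rewrite E_Enc; eexists.
  by rewrite H E_Enc; eexists.
move: H; rewrite -e => /(congr1 (stP (size p))); rewrite !stP_Enc => -[h1 h2 h3].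
by split => //; rewrite [i]surjective_pairing [i']surjective_pairing h1 h2.
Qed.

Lemma decode_srcw p i y : decode (pref (cat_inf (srcw p i) y)) <> None.
Proof. by rewrite embed_Enc pref_embed decode_code. Qed.

Lemma tbl_pc C bt : prefix_code C -> (forall i, injective (bt i)) -> prefix_code (tbl C bt).
Proof.
move=> pc hbt; have uC := pc.1.
have mA w : w \in [seq srcw (nth [::] C x.1) (bt x.1 x.2) | x <- [seq (a, b) | a <- iota 0 (size C), b <- enum {: I}]] ->
    exists i j, [/\ i < size C, nth [::] C i \in C & w = srcw (nth [::] C i) (bt i j)].
  case/mapP => -[i j] /allpairsP [[i' j'] /= [hi _ [-> ->]]] ->.
  rewrite mem_iota add0n in hi; exists i', j'; split => //; exact: mem_nth.
have mC w : w \in compl -> size w = L /\ decode w = None.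
  by rewrite mem_filter mem_all_words => /andP [/eqP -> /eqP ->].
split.
  rewrite cat_uniq; apply/and3P; split.
  - rewrite map_inj_in_uniq.
      apply: allpairs_uniq; [exact: iota_uniq | exact: enum_uniq|].
      by move=> [a b] [c d] _ _ /= [-> ->].
    move=> [i j] [i' j'] /allpairsP [[a b] /= [ha _ [-> ->]]] /allpairsP [[c d] /= [hc _ [-> ->]]] /= H.
    rewrite mem_iota add0n in ha; rewrite mem_iota add0n in hc.
    have := congr1 (fun w => cat_inf w (fun _ => zn)) H.
    case/(srcw_cat_inj pc (mem_nth _ ha) (mem_nth _ hc)) => e1 e2 _.
    have eac : a = c by apply/eqP; rewrite -(nth_uniq [::] ha hc uC) e1.
    by move: e2; rewrite eac => /hbt ->.
  - apply/hasP => -[w /mC [hs hd] /mA [i [j [hi _ hw]]]].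
    move: hs; rewrite hw size_cat size_code => /eqP; rewrite -{2}(addn0 L) eqn_add2l size_eq0 => /eqP h0.
    move: hd; rewrite hw /srcw h0 cats0 decode_code //.
  - by rewrite filter_uniq // uniq_all_words.
move=> z.
case hz: (decode (pref z)) => [i0|].
  set Z := proj z i0.
  have eZ : embed Z = z by exact: embed_proj.
  have [p [[hpC hpx] _]] := pc.2 (E Z).
  set i := index p C.
  have hi : i < size C by rewrite index_mem.
  have hnp : nth [::] C i = p by rewrite nth_index.
  case: (injF_bij (hbt i)) => gi hg1 hg2.
  have eZ2 : Z = Enc p (i0.1, st (size p) Z.2).
    by rewrite -{1}(Enc_dec (size p) Z) (is_prefixP hpx).1.
  set jj := (st (size p) Z.2).1; set yy := (st (size p) Z.2).2.
  have eZ3 : Enc p (i0.1, (jj, yy)) = Z by rewrite /jj /yy -surjective_pairing -eZ2.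
  exists (srcw p (i0.1, jj)); split.
    split.
      rewrite mem_cat; apply/orP; left.
      apply/mapP; exists (i, gi (i0.1, jj)); last by rewrite /= hnp hg2.
      by apply/allpairsP; exists (i, gi (i0.1, jj)); rewrite mem_iota add0n hi mem_enum.
    by exists yy; rewrite embed_Enc eZ3 eZ.
  move=> s' [hs' [y' hy']].
  move: hs'; rewrite mem_cat => /orP [/mA [i' [j' [hi' hC' hse]]]|/mC [hs hd]].
    rewrite hse in hy' *.
    have H : cat_inf (srcw p (i0.1, jj)) yy = cat_inf (srcw (nth [::] C i') (bt i' j')) y'.
      by rewrite -hy' embed_Enc eZ3 eZ.
    by case: (srcw_cat_inj pc hpC hC' H) => -> -> _.
  exfalso; move: hz; rewrite /pref hy' -hs mkseq_cat_inf hd //.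
exists (pref z); split.
  split.
    by rewrite mem_cat; apply/orP; right; rewrite mem_filter hz mem_all_words size_mkseq eqxx.
  by exists (shift L z); rewrite /pref cat_inf_mkseq.
move=> s' [hs' [y' hy']].
move: hs'; rewrite mem_cat => /orP [/mA [i' [j' [hi' hC' hw]]]|/mC [hs hd]].
  by exfalso; move: hz; rewrite hy' hw; apply: decode_srcw.
by rewrite /pref hy' -hs mkseq_cat_inf.
Qed.

Lemma row_loc f (P Q : seq (seq 'I_m)) (sg tau : seq {perm 'I_m}) :
  (forall i, i < size P -> forall u : cantor m,
     f (cat_inf (nth [::] P i) (act_inf (nth 1%g sg i) u))
     = cat_inf (nth [::] Q i) (act_inf (nth 1%g tau i) u)) ->
  forall i, i < size P ->
  loc f (nth [::] P i) (nth [::] Q i) ((nth 1%g sg i)^-1 * nth 1%g tau i)%g.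
Proof.
move=> hf i hi v.
have := hf i hi (act_inf (nth 1%g sg i)^-1 v).
by rewrite act_infM mulVg act_inf1 act_infM.
Qed.

Lemma in_V_locall (H : {perm 'I_m} -> Prop) f : in_V H f -> locall f.
Proof.
case=> P [Q [sg [tau [[hQ hsg htau] [pcP pcQ _ _ hf]]]]] x.
have [p [[hp hpx] _]] := pcP.2 x.
have hi : index p P < size P by rewrite index_mem.
exists (size p), (nth [::] Q (index p P)), ((nth 1%g sg (index p P))^-1 * nth 1%g tau (index p P))%g.
rewrite (is_prefixP hpx).1.
by have := row_loc hf hi; rewrite nth_index.
Qed.

Lemma G_ext1 (G : {group {perm 'I_m}}) : @G_ext m n G 1%g.
Proof.
exists 1%g; first exact: group1.
by split => [j i e|i _]; rewrite !perm1.
Qed.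

Lemma in_V_phi (G : {group {perm 'I_m}}) f :
  in_V (fun g => g \in G) f -> in_V (@G_ext m n G) (phi f).
Proof.
case=> P [Q [sg [tau [[hQ hsg htau] [pcP pcQ _ _ hf]]]]].
set th := fun i => ((nth 1%g sg i)^-1 * nth 1%g tau i)%g.
set P' := tbl P (fun _ j => j).
set Q' := tbl Q (fun i j => ((j.1 * th i)%g, j.2)).
have eQ' : Q' = [seq srcw (nth [::] Q x.1) ((x.2.1 * th x.1)%g, x.2.2)
                | x <- [seq (a, b) | a <- iota 0 (size P), b <- enum {: I}]] ++ compl.
  by rewrite /Q' /tbl hQ.
set AP := [seq (a, b) | a <- iota 0 (size P), b <- enum {: I}].
have sP' : size P' = size AP + size compl by rewrite /P' /tbl size_cat size_map.
exists P', Q', (nseq (size P') 1%g), (nseq (size P') 1%g).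
split.
  split; rewrite ?size_nseq //.
  by rewrite eQ' sP' size_cat size_map.
split.
- by apply: tbl_pc => // i a b.
- apply: tbl_pc => // i [a b] [c d] /= [/mulIg -> ->] //.
- by move=> s; rewrite mem_nseq => /andP [_ /eqP ->]; exact: G_ext1.
- by move=> s; rewrite mem_nseq => /andP [_ /eqP ->]; exact: G_ext1.
move=> i hi u.
rewrite !nth_nseq hi act_inf1 eQ' /P' /tbl -/AP.
rewrite !nth_cat !size_map.
case: ifP => hia.
  have x0 : nat * I := (0, (1%g, ord0)).
  rewrite !(nth_map x0) //.
  have hx : nth x0 AP i \in AP by exact: mem_nth.
  move: hx => /allpairsP [[a b] /= [ha _ ->]] /=.
  rewrite mem_iota add0n in ha.
  rewrite !embed_Enc phi_embed; congr embed.
  rewrite (PHI_char (loc_Enc _ (row_loc hf ha))) /=.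
  by rewrite -(size_map (b.1^-1)%g) st_enc0.
have hia' : size AP <= i by rewrite leqNgt hia.
have hic : i - size AP < size compl by move: hi; rewrite sP'; lia.
have := mem_nth [::] hic; rewrite mem_filter mem_all_words => /andP [hd hs].
rewrite /phi /pref -(eqP hs) mkseq_cat_inf.
by rewrite (eqP hd).
Qed.

End Mach.


Theorem theorem1p2 (m n k : nat) (G : {group {perm 'I_m}}) :
  2 <= m -> 2 <= n -> 1 <= k -> n = k * (m - 1) + m ->
  exists phi : (cantor m -> cantor m) -> (cantor n -> cantor n),
    [/\ (forall f, in_V (fun g => g \in G) f -> in_V (@G_ext m n G) (phi f)),
        (forall f g, in_V (fun x => x \in G) f -> in_V (fun x => x \in G) g ->
           phi (f \o g) = phi f \o phi g) &
        (forall f g, in_V (fun x => x \in G) f -> in_V (fun x => x \in G) g ->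
           phi f = phi g -> f = g)].
Proof.
move=> Hm Hn2 Hk Hn.
exists (phi Hm Hk Hn); split.
- by move=> f hf; apply: in_V_phi.
- by move=> f g hf hg; apply: phi_comp; [exact: in_V_locall hf | exact: in_V_locall hg].
- by move=> f g hf hg; apply: phi_inj; [exact: in_V_locall hf | exact: in_V_locall hg].
Qed.
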